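(* For every integer $n\ge 3$, the Kemeny's constant of $M_n$ is $$Kc(M_n)=\frac{n^{2}-1}{4}+\frac{\sqrt{3}\,n}{2}\cdot\frac{p^{n}-q^{n}}{p^{n}+q^{n}+2}.$$
   Context: For an integer $n\ge 3$, the Möbius polyomino network $M_n$ is the graph with vertex set $\{1,\dots,n\}\cup\{1',\dots,n'\}$ whose edges are $\{i,i+1\}$ and $\{i',(i+1)'\}$ for $1\le i\le n-1$, $\{i,i'\}$ for $1\le i\le n$, and the two edges $\{1,n'\}$ and $\{1',n\}$; it is $3$-regular with $2n$ vertices and $3n$ edges. $p=2+\sqrt3$, $q=2-\sqrt3$. For a connected graph $G$ on $N$ vertices, its normalized Laplacian is $\mathcal L(G)=D^{-1/2}(D-A)D^{-1/2}$ ($D$ the degree matrix, $A$ the adjacency matrix), with eigenvalues $0=\lambda_1<\lambda_2\le\dots\le\lambda_N$, and Kemeny's constant is $Kc(G)=\sum_{i=2}^{N}1/\lambda_i$. *)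

(* Defs.v *)
From HB Require Import structures.
From mathcomp Require Import all_boot all_order all_algebra.
Set Implicit Arguments. Unset Strict Implicit. Unset Printing Implicit Defensive.
Import Order.TTheory GRing.Theory Num.Theory.
Local Open Scope ring_scope.

(* Vertex labelling of M_n on 'I_(n + n) (0-based):
   unprimed vertex i (1 <= i <= n)  |-> index i - 1
   primed vertex i' (1 <= i <= n)   |-> index n + i - 1 *)

(* The five edge families of M_n, listed as ordered pairs (x, y):
   {i, i+1} (1 <= i <= n-1); {i', (i+1)'} (1 <= i <= n-1); {i, i'} (1 <= i <= n);
   {1, n'}; {1', n}. *)
Definition mobius_edge (n x y : nat) : bool :=
     ((x.+1 == y) && (y < n)%N)
  || ((n <= x)%N && (x.+1 == y) && (y < n + n)%N)
  || ((x < n)%N && (y == x + n)%N)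
  || ((x == 0%N) && (y == (n + n).-1))
  || ((x == n) && (y == n.-1)).

Definition mobius_adj (R : nzRingType) (n : nat) : 'M[R]_(n + n) :=
  \matrix_(u, v) (if mobius_edge n u v || mobius_edge n v u then 1 else 0).

Definition deg_mx (R : nzRingType) (N : nat) (A : 'M[R]_N) : 'M[R]_N :=
  diag_mx (\row_u \sum_v A u v).

Definition deg_inv_sqrt_mx (R : rcfType) (N : nat) (A : 'M[R]_N) : 'M[R]_N :=
  diag_mx (\row_u (Num.sqrt (\sum_v A u v))^-1).

Definition norm_laplacian (R : rcfType) (N : nat) (A : 'M[R]_N) : 'M[R]_N :=
  deg_inv_sqrt_mx A *m (deg_mx A - A) *m deg_inv_sqrt_mx A.

Definition is_sorted_spectrum (R : rcfType) (N : nat) (M : 'M[R]_N) (s : seq R) : Prop :=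
  sorted <=%R s /\ char_poly M = \prod_(x <- s) ('X - x%:P).

(* Kemeny's constant sum_{i=2}^N 1/lambda_i for the sorted spectrum s. *)
Definition kemeny_of_spectrum (R : rcfType) (s : seq R) : R :=
  \sum_(1 <= i < size s) (s`_i)^-1.

(* Main.v *)
Require Import Defs.
From HB Require Import structures.
From mathcomp Require Import all_boot all_order all_algebra.
From mathcomp Require Import all_field zify ring lra.
From mathcomp Require Import complex.
From mathcomp Require cyclic.
Import Order.TTheory GRing.Theory Num.Theory.
Local Open Scope ring_scope.

Definition sc n u := if u == (n+n).-1 then 0%N else u.+1.
Definition pc n u := if u == 0%N then (n+n).-1 else u.-1.
Definition oc n u := if (u < n)%N then (u + n)%N else (u - n)%N.

Lemma adj_char (n u v : nat) : (3 <= n)%N -> (u < n + n)%N -> (v < n + n)%N ->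
  (mobius_edge n u v || mobius_edge n v u) =
  [|| v == sc n u, v == pc n u | v == oc n u].
Proof.
move=> hn hu hv; rewrite /mobius_edge /sc /pc /oc.
case: (u =P (n+n).-1) => h1; case: (u =P 0%N) => h2; case: (ltnP u n) => h3;
apply/idP/idP; lia.
Qed.

Lemma adj_dist (n u : nat) : (3 <= n)%N -> (u < n + n)%N ->
  [/\ sc n u != pc n u, sc n u != oc n u & pc n u != oc n u].
Proof.
move=> hn hu; rewrite /sc /pc /oc.
case: (u =P (n+n).-1) => h1; case: (u =P 0%N) => h2; case: (ltnP u n) => h3;
split; lia.
Qed.

Lemma adj_entry (R : nzRingType) n (hn : (3 <= n)%N) (u v : 'I_(n + n)) :
  mobius_adj R n v u =
  ((v == sc n u :> nat)%:R + (v == pc n u :> nat)%:R + (v == oc n u :> nat)%:R).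
Proof.
rewrite mxE orbC (adj_char _ _ _ hn (ltn_ord u) (ltn_ord v)).
have [d1 d2 d3] := adj_dist _ _ hn (ltn_ord u).
case: (v =P sc n u :> nat) => e1 /=.
  by rewrite -e1 in d1 d2 *; rewrite (negbTE d1) (negbTE d2) !addr0.
case: (v =P pc n u :> nat) => e2 /=.
  by rewrite -e2 in d3 *; rewrite (negbTE d3) add0r addr0.
by case: (v =P oc n u :> nat) => e3 /=; rewrite !add0r.
Qed.



Lemma sc_lt n u : (3 <= n)%N -> (u < n + n)%N -> (sc n u < n + n)%N.
Proof. rewrite /sc; case: (u =P (n+n).-1); lia. Qed.
Lemma pc_lt n u : (3 <= n)%N -> (u < n + n)%N -> (pc n u < n + n)%N.
Proof. rewrite /pc; case: (u =P 0%N); lia. Qed.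
Lemma oc_lt n u : (3 <= n)%N -> (u < n + n)%N -> (oc n u < n + n)%N.
Proof. rewrite /oc; case: (ltnP u n); lia. Qed.

Lemma sum_ind (R : nzRingType) N (F : nat -> R) x : (x < N)%N ->
  \sum_(v < N) (v == x :> nat)%:R * F v = F x.
Proof.
move=> hx; rewrite (bigD1 (Ordinal hx)) //= eqxx mul1r big1 ?addr0 //.
by move=> v; rewrite -val_eqE /= => /negbTE ->; rewrite mul0r.
Qed.

Lemma adj_sym (R : nzRingType) n (u v : 'I_(n + n)) :
  mobius_adj R n u v = mobius_adj R n v u.
Proof. by rewrite !mxE orbC. Qed.

Lemma adj_rowsum (R : nzRingType) n (hn : (3 <= n)%N) (u : 'I_(n + n)) :
  \sum_v mobius_adj R n u v = 3%:R.
Proof.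
under eq_bigr => v _ do rewrite adj_sym adj_entry //.
rewrite !big_split /=.
have e x : (x < n + n)%N -> \sum_(v < n + n) (v == x :> nat)%:R = 1 :> R.
  by move=> hx; rewrite -[RHS](@sum_ind R (n+n) (fun _ => 1) x hx); apply: eq_bigr => v _; rewrite mulr1.
by rewrite (e _ (sc_lt _ _ hn (ltn_ord u))) (e _ (pc_lt _ _ hn (ltn_ord u))) (e _ (oc_lt _ _ hn (ltn_ord u))) -[3%:R]/(1 *+ 3) !mulrS mulr0n addr0 addrA.
Qed.

Lemma laplacian_eq (R : rcfType) n (hn : (3 <= n)%N) :
  norm_laplacian (mobius_adj R n) = 1%:M - 3%:R^-1 *: mobius_adj R n.
Proof.
set A := mobius_adj R n.
have hD : deg_mx A = 3%:R%:M.
  by apply/matrixP => i j; rewrite !mxE adj_rowsum.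
have hS : deg_inv_sqrt_mx A = (Num.sqrt 3%:R)^-1%:M.
  by apply/matrixP => i j; rewrite !mxE adj_rowsum.
rewrite /norm_laplacian hD hS mul_scalar_mx mul_mx_scalar scalerA.
have h3 : (Num.sqrt 3%:R)^-1 * (Num.sqrt 3%:R)^-1 = 3%:R^-1 :> R.
  by rewrite -invfM -expr2 sqr_sqrtr // ler0n.
by rewrite h3 scalerBr scale_scalar_mx mulVf // pnatr_eq0.
Qed.


Lemma char_poly_sim (F : fieldType) N (M V : 'M[F]_N) (d : 'rV[F]_N) :
  V \in unitmx -> V *m M = diag_mx d *m V ->
  char_poly M = \prod_(i < N) ('X - (d 0 i)%:P).
Proof.
move=> hV hVM.
have hd : char_poly (diag_mx d) = \prod_(i < N) ('X - (d 0 i)%:P).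
  by rewrite char_poly_trig ?diag_mx_is_trig //; apply: eq_bigr => i _; rewrite mxE eqxx mulr1n.
rewrite -hd.
have E : map_mx polyC V *m char_poly_mx M = char_poly_mx (diag_mx d) *m map_mx polyC V.
  rewrite /char_poly_mx mulmxBr mulmxBl -!map_mxM hVM mul_mx_scalar mul_scalar_mx //.
have /(congr1 determinant) := E.
rewrite !det_mulmx det_map_mx /char_poly [in X in _ = X]mulrC => /mulfI; apply.
by rewrite polyC_eq0 -unitfE -unitmxE.
Qed.

Lemma prim_root_exists (R : rcfType) m : (0 < m)%N -> exists z : R[i], m.-primitive_root z.
Proof.
pose p : {poly R[i]} := 'X^m - 1; have [r Dp] := closed_field_poly_normal p.
move=> m_gt0; rewrite (monicP _) ?monicXnsubC // scale1r in Dp.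
have rn1: all m.-unity_root r by apply/allP=> z; rewrite -root_prod_XsubC -Dp.
have sz_r: (m < (size r).+1)%N.
  by rewrite -(size_prod_XsubC r id) -Dp size_XnsubC.
have [|z] := hasP (cyclic.has_prim_root m_gt0 rn1 _ sz_r); last by exists z.
by rewrite -separable_prod_XsubC -Dp separable_Xn_sub_1 // pnatr_eq0 -lt0n.
Qed.


Lemma pow_sc (F : nzRingType) n u (x : F) : x ^+ (n + n) = 1 -> (0 < n)%N ->
  x ^+ (sc n u) = x ^+ u * x.
Proof.
move=> hx hn; rewrite /sc; case: eqP => [->|_]; last by rewrite exprSr.
by rewrite expr0 -exprSr prednK ?hx // addn_gt0 hn.
Qed.

Lemma pow_pc (F : nzRingType) n u (x : F) : x ^+ (n + n) = 1 -> (0 < n)%N ->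
  (u < n + n)%N -> x ^+ (pc n u) = x ^+ u * x ^+ (n + n).-1.
Proof.
move=> hx hn hu; rewrite /pc; case: eqP => [->|h]; first by rewrite expr0 mul1r.
rewrite -exprD; have -> : (u + (n + n).-1 = u.-1 + (n + n))%N by lia.
by rewrite exprD hx mulr1.
Qed.

Lemma pow_oc (F : nzRingType) n u (x : F) : x ^+ (n + n) = 1 ->
  (u < n + n)%N -> x ^+ (oc n u) = x ^+ u * x ^+ n.
Proof.
move=> hx hu; rewrite /oc -exprD; case: ltnP => h //.
have -> : (u + n = (u - n) + (n + n))%N by lia.
by rewrite exprD hx mulr1.
Qed.

Lemma sum_ind_r (R : comNzRingType) N (F : nat -> R) x : (x < N)%N ->
  \sum_(v < N) F v * (v == x :> nat)%:R = F x.
Proof.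
move=> hx; rewrite -(@sum_ind R N F x hx); apply: eq_bigr => v _; exact: mulrC.
Qed.

Definition Vmx (F : nzRingType) N (z : F) : 'M[F]_N := \matrix_(k, u) z ^+ (k * u).
Definition lam (F : nzRingType) n (z : F) (k : nat) : F :=
  z ^+ k + z ^+ (k * (n + n).-1) + z ^+ (k * n).

Arguments Vmx {F} N z.
Arguments lam {F} n z k.
Arguments sum_ind_r {R N} F {x}.

Lemma eigen_eq (F : comNzRingType) n (hn : (3 <= n)%N) (z : F) :
  z ^+ (n + n) = 1 ->
  Vmx (n + n) z *m mobius_adj F n = diag_mx (\row_k lam n z k) *m Vmx (n + n) z.
Proof.
move=> hz; apply/matrixP => k u; rewrite mul_diag_mx !mxE.
have hx : (z ^+ k) ^+ (n + n) = 1 by rewrite -exprM mulnC exprM hz expr1n.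
have hn0 : (0 < n)%N by lia.
under eq_bigr => w _ do rewrite adj_entry // !mxE !mulrDr.
rewrite !big_split /=.
rewrite (sum_ind_r (fun w => z ^+ (k * w)) (sc_lt _ _ hn (ltn_ord u))).
rewrite (sum_ind_r (fun w => z ^+ (k * w)) (pc_lt _ _ hn (ltn_ord u))).
rewrite (sum_ind_r (fun w => z ^+ (k * w)) (oc_lt _ _ hn (ltn_ord u))).
rewrite !exprM pow_sc // pow_pc // pow_oc // /lam !exprM.
ring.
Qed.

Lemma Vmx_unit (F : fieldType) N (z : F) : N.-primitive_root z -> Vmx N z \in unitmx.
Proof.
move=> hz.
have -> : Vmx N z = Vandermonde N (\row_u z ^+ u).
  by apply/matrixP => k u; rewrite !mxE -exprM mulnC.
rewrite unitmxE unitfE det_Vandermonde prodf_seq_neq0.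
apply/allP => i _; rewrite prodf_seq_neq0; apply/allP => j _.
apply/implyP => hij; rewrite !mxE subr_eq0 (eq_prim_root_expr hz) !modn_small //.
by rewrite neq_ltn hij orbT.
Qed.


Set Implicit Arguments. Unset Strict Implicit.

Lemma unit_norm1 (R : rcfType) (x : R[i]) m : (0 < m)%N -> x ^+ m = 1 ->
  x * conjc x = 1.
Proof.
move=> hm hx; have h0 := mulcJ_ge0 x.
have : (x * conjc x) ^+ m == 1.
  by rewrite exprMn -rmorphXn hx rmorph1 mulr1.
by rewrite pexpr_eq1 // => /eqP.
Qed.

Lemma conj_inv (R : rcfType) (x : R[i]) m : (0 < m)%N -> x ^+ m = 1 ->
  conjc x = x^-1.
Proof.
move=> hm hx; have h := unit_norm1 hm hx.
have x0 : x != 0.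
  by apply/eqP => x0; move: h; rewrite x0 mul0r => /esym/eqP; rewrite oner_eq0.
by rewrite -[conjc x]mul1r -(mulVf x0) -mulrA h mulr1.
Qed.

Lemma Re_le1 (R : rcfType) (x : R[i]) m : (0 < m)%N -> x ^+ m = 1 -> complex.Re x <= 1.
Proof.
move=> hm hx; have := unit_norm1 hm hx; case: x hx => a b _ /=.
move=> [h1 _] /=.
nra.
Qed.

Definition rr (R : rcfType) (z : R[i]) (k : nat) : R :=
  1 - 3%:R^-1 * (2%:R * complex.Re (z ^+ k) + (-1) ^+ k).

Lemma zn_m1 (F : idomainType) n (z : F) : (0 < n)%N -> (n + n).-primitive_root z -> z ^+ n = -1.
Proof.
move=> hn hz; have : (z ^+ n) ^+ 2 == 1 by rewrite -exprM muln2 -addnn prim_expr_order.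
rewrite sqrf_eq1 => /orP [h|/eqP //].
move: h; rewrite -(expr0 z) (eq_prim_root_expr hz) mod0n modn_small; last by lia.
by move=> /eqP h; lia.
Qed.

Lemma mu_real (R : rcfType) n (hn : (3 <= n)%N) (z : R[i])
  (hz : (n + n).-primitive_root z) (k : nat) :
  1 - 3%:R^-1 * lam n z k = ((rr z k)%:C)%C.
Proof.
have hn0 : (0 < n + n)%N by lia.
set x := z ^+ k.
have hx : x ^+ (n + n) = 1 by rewrite /x -exprM mulnC exprM (prim_expr_order hz) expr1n.
have x0 : x != 0.
  by apply/eqP => x0; move: hx; rewrite x0 expr0n; case: (n + n)%N hn0 => // m _ /esym/eqP; rewrite oner_eq0.
have hinv : x ^+ (n + n).-1 = x^-1.
  by rewrite -[x ^+ _]mulr1 -(mulfV x0) mulrA -exprSr prednK // hx mul1r.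
rewrite /lam exprM -/x hinv -(conj_inv hn0 hx) addcJ.
have hn1 : (0 < n)%N by lia.
rewrite mulnC exprM (zn_m1 hn1 hz).
by rewrite /rr -/x !(rmorphB, rmorph1, rmorphM, fmorphV, rmorphD, rmorph_nat, rmorphXn, rmorphN1).
Qed.

Lemma rr_ge0 (R : rcfType) n (hn : (3 <= n)%N) (z : R[i])
  (hz : (n + n).-primitive_root z) (k : nat) : 0 <= rr z k.
Proof.
have hn0 : (0 < n + n)%N by lia.
have hx : (z ^+ k) ^+ (n + n) = 1 by rewrite -exprM mulnC exprM (prim_expr_order hz) expr1n.
have := Re_le1 hn0 hx; rewrite /rr -signr_odd; case: (odd k) => /= h.
all: lra.
Qed.


Lemma map_adj (R : rcfType) n :
  map_mx (real_complex R) (mobius_adj R n) = mobius_adj R[i] n.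
Proof.
apply/matrixP => i j; rewrite !mxE.
by case: ifP => _; rewrite ?rmorph1 ?rmorph0.
Qed.

Lemma charLC (R : rcfType) n (hn : (3 <= n)%N) (z : R[i])
  (hz : (n + n).-primitive_root z) :
  char_poly (map_mx (real_complex R) (norm_laplacian (mobius_adj R n))) =
  \prod_(k < n + n) ('X - ((rr z k)%:C%C)%:P).
Proof.
have hz1 : z ^+ (n + n) = 1 by exact: prim_expr_order.
rewrite laplacian_eq // map_mxB map_mx1 map_mxZ map_adj fmorphV rmorph_nat.
rewrite (@char_poly_sim _ _ _ (Vmx (n + n) z) (\row_k (1 - 3%:R^-1 * lam n z k))).
- by apply: eq_bigr => k _; rewrite mxE mu_real.
- exact: Vmx_unit.
rewrite mulmxBr mulmx1 -scalemxAr eigen_eq //.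
apply/matrixP => i j; rewrite !mul_diag_mx !mxE; ring.
Qed.

Lemma charL (R : rcfType) n (hn : (3 <= n)%N) (z : R[i])
  (hz : (n + n).-primitive_root z) :
  char_poly (norm_laplacian (mobius_adj R n)) =
  \prod_(k < n + n) ('X - (rr z k)%:P).
Proof.
apply: (@map_poly_inj _ _ (real_complex R)).
rewrite map_char_poly (charLC hn hz) rmorph_prod; apply: eq_bigr => k _.
exact: (esym (map_polyXsubC _ _)).
Qed.


Lemma geom0 (F : fieldType) n (x : F) : x ^+ n = 1 -> x != 1 ->
  \sum_(j < n) x ^+ j = 0.
Proof.
move=> hx hx1; have := subrX1 x n; rewrite hx subrr => /esym/eqP.
by rewrite mulf_eq0 subr_eq0 (negbTE hx1) /= => /eqP.
Qed.

Lemma orth (F : fieldType) n (w : F) (k : nat) : n.-primitive_root w ->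
  \sum_(j < n) (w ^+ j) ^+ k = if (k %% n == 0)%N then n%:R else 0.
Proof.
move=> hw; under eq_bigr => j _ do rewrite -exprM mulnC exprM.
case: ifP => hk.
  have -> : w ^+ k = 1 by rewrite -(prim_expr_mod hw) (eqP hk) expr0.
  by under eq_bigr do rewrite expr1n; rewrite sumr_const card_ord.
apply: geom0; first by rewrite -exprM mulnC exprM (prim_expr_order hw) expr1n.
by rewrite -(prim_expr_mod hw) -(expr0 w) (eq_prim_root_expr hw) mod0n modn_mod hk.
Qed.

Definition Sx (F : nzRingType) n (x : F) := \sum_(k < n) k%:R * x ^+ k.

Lemma Sx_gen (F : comNzRingType) (x : F) m :
  (1 - x) * Sx m x + m%:R * x ^+ m = \sum_(k < m) x ^+ k + x ^+ m - 1.
Proof.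
elim: m => [|m IH]; first by rewrite /Sx !big_ord0 mulr0 mul0r !add0r expr0 subrr.
rewrite /Sx !big_ord_recr /= -/(Sx m x).
have -> : (1 - x) * (Sx m x + m%:R * x ^+ m) + m.+1%:R * x ^+ m.+1 =
   ((1 - x) * Sx m x + m%:R * x ^+ m) + x ^+ m.+1.
  rewrite exprS -natr1; ring.
rewrite IH; ring.
Qed.

Lemma Sx_root (F : fieldType) n (x : F) : x ^+ n = 1 -> x != 1 ->
  (1 - x) * Sx n x = - n%:R.
Proof.
move=> hx hx1; have := Sx_gen x n; rewrite hx geom0 // mulr1 add0r subrr.
by move=> /eqP; rewrite addr_eq0 => /eqP.
Qed.

Lemma sum_nat1 (F : comNzRingType) n : 2%:R * \sum_(k < n) k%:R = n%:R * (n%:R - 1) :> F.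
Proof.
elim: n => [|n IH]; first by rewrite big_ord0 mulr0 mul0r.
by rewrite big_ord_recr /= mulrDr IH -[n.+1]addn1 natrD; ring.
Qed.

Lemma sum_nat2 (F : comNzRingType) n :
  6%:R * \sum_(k < n) k%:R ^+ 2 = n%:R * (n%:R - 1) * (2%:R * n%:R - 1) :> F.
Proof.
elim: n => [|n IH]; first by rewrite big_ord0 mulr0 !mul0r.
rewrite big_ord_recr /= mulrDr IH -[n.+1]addn1 natrD.
have -> : (6%:R : F) = 2%:R * 3%:R by rewrite -natrM.
have -> : (3%:R : F) = 2%:R + 1 by rewrite -[3%N]/(2 + 1)%N natrD.
ring.
Qed.

Lemma inner (F : fieldType) n (w : F) (k l : nat) : n.-primitive_root w -> (k < n)%N -> (l < n)%N ->
  \sum_(j < n) (w ^+ j) ^+ k * ((w ^+ j)^-1) ^+ l = if k == l then n%:R else 0.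
Proof.
move=> hw hk hl.
have w0 : w != 0.
  apply/eqP => w0; have := prim_expr_order hw; rewrite w0 expr0n.
  by case: n hk {hw hl} => // m _ /eqP; rewrite eq_sym oner_eq0.
have wl0 : w ^+ l != 0 by rewrite expf_neq0.
have e j : (w ^+ j) ^+ k * ((w ^+ j)^-1) ^+ l = (w ^+ k / w ^+ l) ^+ j.
  by rewrite exprMn !exprVn -!exprM !(mulnC j).
under eq_bigr => j _ do rewrite e.
case: eqP => [<-|hkl].
  rewrite mulfV ?expf_neq0 //.
  by under eq_bigr do rewrite expr1n; rewrite sumr_const card_ord.
apply: geom0.
  rewrite exprMn exprVn -!exprM mulnC exprM (prim_expr_order hw) expr1n.
  by rewrite mulnC exprM (prim_expr_order hw) expr1n invr1 mulr1.
apply/eqP => h; apply: hkl.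
have h2 : w ^+ k = w ^+ l by move: h => /(congr1 ( *%R^~ (w ^+ l))); rewrite mul1r divfK.
by move: h2 => /eqP; rewrite (eq_prim_root_expr hw) !modn_small // => /eqP.
Qed.


Lemma parseval (F : fieldType) n (w : F) : n.-primitive_root w ->
  \sum_(j < n) Sx n (w ^+ j) * Sx n ((w ^+ j)^-1) = n%:R * \sum_(k < n) k%:R ^+ 2.
Proof.
move=> hw.
have e j : Sx n (w ^+ j) * Sx n ((w ^+ j)^-1) = \sum_(k < n) \sum_(l < n)
   ((k%:R * l%:R) * ((w ^+ j) ^+ k * ((w ^+ j)^-1) ^+ l)).
  rewrite /Sx mulr_suml; apply: eq_bigr => k _; rewrite mulr_sumr; apply: eq_bigr => l _; ring.
under eq_bigr do rewrite e.
rewrite exchange_big /=.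
under eq_bigr => k _ do rewrite exchange_big /=.
under eq_bigr => k _ do under eq_bigr => l _ do rewrite -mulr_sumr (inner hw (ltn_ord k) (ltn_ord l)).
rewrite mulr_sumr; apply: eq_bigr => k _.
rewrite (bigD1 k) //= eqxx big1 ?addr0; first by rewrite expr2; ring.
by move=> l; rewrite eq_sym -val_eqE /= => /negbTE ->; rewrite mulr0.
Qed.

Lemma term_even (F : numFieldType) (a b S1 S2 m : F) :
  a * S1 = - m -> b * S2 = - m -> m != 0 ->
  (3%:R^-1 * (a * b))^-1 = 3%:R / (m * m) * (S1 * S2).
Proof.
move=> h1 h2 m0.
have : a * S1 != 0 by rewrite h1 oppr_eq0.
have : b * S2 != 0 by rewrite h2 oppr_eq0.
rewrite !mulf_eq0 !negb_or => /andP [b0 S20] /andP [a0 S10].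
have -> : m * m = (a * S1) * (b * S2) by rewrite h1 h2 mulrNN.
have h3 : (3%:R : F) != 0 by rewrite pnatr_eq0.
by field; rewrite S20 b0 S10 a0 /=.
Qed.

Lemma prim_neq0 (F : idomainType) n (w : F) : n.-primitive_root w -> w != 0.
Proof.
move=> hw; have hn := prim_order_gt0 hw; apply/eqP => w0.
have := prim_expr_order hw; rewrite w0 expr0n eqn0Ngt hn /= => /eqP.
by rewrite mulr0n eq_sym oner_eq0.
Qed.

Lemma sum_k (F : numFieldType) n : \sum_(k < n) (k%:R : F) = n%:R * (n%:R - 1) / 2%:R.
Proof.
have h2 : (2%:R : F) != 0 by rewrite pnatr_eq0.
by rewrite -(sum_nat1 F n) mulrC mulKf.
Qed.

Lemma sum_k2 (F : numFieldType) n : \sum_(k < n) (k%:R : F) ^+ 2 =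
  n%:R * (n%:R - 1) * (2%:R * n%:R - 1) / 6%:R.
Proof.
have h6 : (6%:R : F) != 0 by rewrite pnatr_eq0.
by rewrite -(sum_nat2 F n) mulrC mulKf.
Qed.

Lemma even_sum (F : numFieldType) n (w : F) : (0 < n)%N -> n.-primitive_root w ->
  \sum_(j < n) (1 - 3%:R^-1 * (w ^+ j + (w ^+ j)^-1 + 1))^-1 =
  (n%:R ^+ 2 - 1) / 4%:R.
Proof.
move=> hn hw; have w0 := prim_neq0 hw.
have n0 : (n%:R : F) != 0 by rewrite pnatr_eq0 -lt0n.
have key j : (0 < j < n)%N -> (1 - 3%:R^-1 * (w ^+ j + (w ^+ j)^-1 + 1))^-1 =
    3%:R / (n%:R * n%:R) * (Sx n (w ^+ j) * Sx n ((w ^+ j)^-1)).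
  move=> /andP [j0 jn].
  have x0 : w ^+ j != 0 by rewrite expf_neq0.
  have hx : (w ^+ j) ^+ n = 1 by rewrite -exprM mulnC exprM (prim_expr_order hw) expr1n.
  have hx1 : w ^+ j != 1.
    by rewrite -(expr0 w) (eq_prim_root_expr hw) mod0n modn_small // -lt0n.
  have hy : ((w ^+ j)^-1) ^+ n = 1 by rewrite exprVn hx invr1.
  have hy1 : (w ^+ j)^-1 != 1 by rewrite invr_eq1.
  have h1 := Sx_root hx hx1; have h2 := Sx_root hy hy1.
  have -> : 1 - 3%:R^-1 * (w ^+ j + (w ^+ j)^-1 + 1) =
      3%:R^-1 * ((1 - w ^+ j) * (1 - (w ^+ j)^-1)).
    have h3 : (3%:R : F) != 0 by rewrite pnatr_eq0.
    by field; rewrite x0 /=.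
  exact: term_even h1 h2 n0.
have hp := parseval hw.
case: n hn hw w0 n0 key hp => // m _ hw w0 n0 key hp.
rewrite big_ord_recl /= expr0 invr1.
have -> : 1 - 3%:R^-1 * (1 + 1 + 1) = 0 :> F.
  have h3 : (3%:R : F) != 0 by rewrite pnatr_eq0.
  by field.
rewrite invr0 add0r.
rewrite (eq_bigr (fun i : 'I_m => 3%:R / (m.+1%:R * m.+1%:R) *
   (Sx m.+1 (w ^+ bump 0 i) * Sx m.+1 ((w ^+ bump 0 i)^-1)))); last first.
  by move=> i _; apply: key; rewrite /bump leq0n add1n /= ltnS ltn_ord.
rewrite -mulr_sumr.
have hs : \sum_(i < m) Sx m.+1 (w ^+ bump 0 i) * Sx m.+1 ((w ^+ bump 0 i)^-1) =
   m.+1%:R * \sum_(k < m.+1) k%:R ^+ 2 - Sx m.+1 1 * Sx m.+1 1.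
  by rewrite -hp big_ord_recl /= expr0 invr1; ring.
rewrite hs.
have -> : Sx m.+1 (1 : F) = \sum_(k < m.+1) k%:R.
  by rewrite /Sx; apply: eq_bigr => k _; rewrite expr1n mulr1.
rewrite sum_k sum_k2.
have h2 : (2%:R : F) != 0 by rewrite pnatr_eq0.
have h3 : (3%:R : F) != 0 by rewrite pnatr_eq0.
by field; rewrite addrC natr1 pnatr_eq0.
Qed.


Lemma inv_root (F : fieldType) n (a y : F) : y ^+ n = -1 -> a ^+ n + 1 != 0 ->
  (a - y)^-1 = (a ^+ n + 1)^-1 * \sum_(i < n) a ^+ (n.-1 - i) * y ^+ i.
Proof.
move=> hy ha; have := subrXX a y n; rewrite hy opprK => E.
have : (a - y) * \sum_(i < n) a ^+ (n.-1 - i) * y ^+ i != 0 by rewrite -E.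
rewrite mulf_eq0 negb_or => /andP [ay s0].
by rewrite E invfM -mulrA mulVf // mulr1.
Qed.

Lemma sum_inv_roots (F : numFieldType) n (z w a : F) : (0 < n)%N ->
  n.-primitive_root w -> z ^+ n = -1 -> a ^+ n + 1 != 0 ->
  \sum_(j < n) (a - z * w ^+ j)^-1 = n%:R * a ^+ n.-1 / (a ^+ n + 1).
Proof.
move=> hn hw hz ha.
have hy j : (z * w ^+ j) ^+ n = -1.
  by rewrite exprMn hz -exprM mulnC exprM (prim_expr_order hw) expr1n mulr1.
under eq_bigr => j _ do rewrite (inv_root (hy j) ha).
rewrite -mulr_sumr exchange_big /=.
under eq_bigr => i _ do under eq_bigr => j _ do rewrite exprMn mulrA.
under eq_bigr => i _ do rewrite -mulr_sumr (orth _ hw).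
case: n hn hw hz ha hy => // m _ hw hz ha hy.
rewrite big_ord_recl /= big1 ?addr0.
  by rewrite subn0 expr0 mulr1; field; rewrite ha.
by move=> i _; rewrite /bump leq0n add1n modn_small ?ltnS ?ltn_ord //= mulr0.
Qed.

Lemma term_odd (F : numFieldType) (P Q y : F) : P + Q = 4%:R -> P * Q = 1 ->
  y != 0 -> P - y != 0 -> Q - y != 0 -> P - Q != 0 ->
  (1 - 3%:R^-1 * (y + y^-1 - 1))^-1 = 3%:R / (P - Q) * (P / (P - y) - Q / (Q - y)).
Proof.
move=> hs hp y0 py qy pq.
have h3 : (3%:R : F) != 0 by rewrite pnatr_eq0.
have E : 1 - 3%:R^-1 * (y + y^-1 - 1) = - ((y - P) * (y - Q)) / (3%:R * y).
  rewrite (_ : (y - P) * (y - Q) = y * y - (P + Q) * y + P * Q); last by ring.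
  rewrite hs hp; field.
  by rewrite y0.
have yq : y - Q != 0 by rewrite subr_eq0 eq_sym -subr_eq0.
have yp : y - P != 0 by rewrite subr_eq0 eq_sym -subr_eq0.
by rewrite E; field; rewrite qy py pq y0 yq yp.
Qed.

Lemma odd_sum (F : numFieldType) n (z w P Q : F) : (0 < n)%N ->
  n.-primitive_root w -> z ^+ n = -1 ->
  P + Q = 4%:R -> P * Q = 1 -> P ^+ n + 1 != 0 -> Q ^+ n + 1 != 0 -> P - Q != 0 ->
  \sum_(j < n) (1 - 3%:R^-1 * (z * w ^+ j + (z * w ^+ j)^-1 - 1))^-1 =
  3%:R * n%:R * (P ^+ n - Q ^+ n) / ((P - Q) * (P ^+ n + Q ^+ n + 2%:R)).
Proof.
move=> hn hw hz hs hp hP hQ pq.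
have hy j : (z * w ^+ j) ^+ n = -1.
  by rewrite exprMn hz -exprM mulnC exprM (prim_expr_order hw) expr1n mulr1.
have key j : (1 - 3%:R^-1 * (z * w ^+ j + (z * w ^+ j)^-1 - 1))^-1 =
    3%:R / (P - Q) * (P * (P - z * w ^+ j)^-1 - Q * (Q - z * w ^+ j)^-1).
  apply: term_odd => //.
  - apply/eqP => y0; have := hy j; rewrite y0 expr0n; case: n hn {hy hP hQ hw hz} => // m _ /=.
    by move/eqP; rewrite eq_sym oppr_eq0 oner_eq0.
  - by apply: contraNneq hP => /eqP; rewrite subr_eq0 => /eqP ->; rewrite hy addNr.
  - by apply: contraNneq hQ => /eqP; rewrite subr_eq0 => /eqP ->; rewrite hy addNr.
under eq_bigr do rewrite key.
rewrite -mulr_sumr sumrB -!mulr_sumr !sum_inv_roots //.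
case: n hn hw hz hP hQ hy key => // m _ hw hz hP hQ _ _ /=.
have hPQ : (P * P ^+ m) * (Q * Q ^+ m) = 1.
  by rewrite -!exprS -exprMn hp expr1n.
rewrite !exprS.
have -> : P * P ^+ m + Q * Q ^+ m + 2%:R = (P * P ^+ m + 1) * (Q * Q ^+ m + 1).
  rewrite (_ : (P * P ^+ m + 1) * (Q * Q ^+ m + 1) = (P * P ^+ m) * (Q * Q ^+ m) + P * P ^+ m + Q * Q ^+ m + 1); last by ring.
  have e2 : (2%:R : F) = 1 + 1 by rewrite -[2%N]/(1 + 1)%N natrD.
  by rewrite hPQ e2; ring.
rewrite !exprS in hP hQ.
have h3 : (3%:R : F) != 0 by rewrite pnatr_eq0.
by field; rewrite hP hQ pq.
Qed.


Lemma prod_XsubC_perm (F : idomainType) (s t : seq F) :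
  \prod_(x <- s) ('X - x%:P) = \prod_(x <- t) ('X - x%:P) -> perm_eq s t.
Proof.
elim: s t => [|a s IH] t.
  rewrite big_nil => /(congr1 (fun p : {poly F} => size p)); rewrite /= size_poly1 size_prod_XsubC.
  by case: t => // _ [].
rewrite big_cons => E.
have at_ : a \in t by rewrite -root_prod_XsubC -E rootM root_XsubC eqxx.
have pt := perm_to_rem at_.
rewrite (perm_big _ pt) big_cons /= in E.
have /IH ps : \prod_(x <- s) ('X - x%:P) = \prod_(x <- rem a t) ('X - x%:P).
  by apply: (mulfI (negbT (polyXsubC_eq0 a))) E.
by rewrite perm_sym (perm_trans pt) // perm_cons perm_sym.
Qed.

Lemma sum_split_nat (V : nmodType) n (f : nat -> V) :
  \sum_(0 <= k < n + n) f k = \sum_(0 <= j < n) f (2 * j)%N + \sum_(0 <= j < n) f (2 * j).+1.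
Proof.
elim: n => [|n IH]; first by rewrite !big_geq // addr0.
have -> : (n.+1 + n.+1 = (n + n).+2)%N by lia.
rewrite !big_nat_recr //= IH.
have -> : (n + n = 2 * n)%N by lia.
rewrite [in RHS]addrA; congr (_ + _).
exact: addrAC.
Qed.

Lemma sum_split (V : nmodType) n (f : nat -> V) :
  \sum_(k < n + n) f k = \sum_(j < n) f (2 * j)%N + \sum_(j < n) f (2 * j).+1.
Proof.
rewrite -(big_mkord (n := n + n) xpredT f) -(big_mkord (n := n) xpredT (fun j => f (2 * j)%N)).
by rewrite -(big_mkord (n := n) xpredT (fun j => f (2 * j).+1)) sum_split_nat.
Qed.


Lemma lam_form (F : fieldType) n (z : F) k : (0 < n)%N -> (n + n).-primitive_root z ->
  lam n z k = z ^+ k + (z ^+ k)^-1 + (-1) ^+ k.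
Proof.
move=> hn hz.
have hx : (z ^+ k) ^+ (n + n) = 1 by rewrite -exprM mulnC exprM (prim_expr_order hz) expr1n.
have x0 : z ^+ k != 0 by rewrite expf_neq0 // (prim_neq0 hz).
have hn0 : (0 < n + n)%N by lia.
have hinv : (z ^+ k) ^+ (n + n).-1 = (z ^+ k)^-1.
  by rewrite -[_ ^+ _]mulr1 -(mulfV x0) mulrA -exprSr prednK // hx mul1r.
by rewrite /lam exprM hinv mulnC exprM (zn_m1 hn hz).
Qed.

Lemma final_alg (F : fieldType) (s N a b : F) : s ^+ 2 = 3%:R -> s != 0 ->
  a + b + 2%:R != 0 -> 2%:R != 0 :> F ->
  3%:R * N * (a - b) / (((2%:R + s) - (2%:R - s)) * (a + b + 2%:R)) =
  s * N / 2%:R * ((a - b) / (a + b + 2%:R)).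
Proof.
move=> hs s0 d0 h2; have e : 2%:R + s - (2%:R - s) = 2%:R * s by ring.
by rewrite -hs; field; rewrite d0 h2 e mulf_neq0.
Qed.

Lemma final_gen (R K : numFieldType) (f : {rmorphism R -> K}) n (p q : R) (EK OK : K) :
  EK = (n%:R ^+ 2 - 1) / 4%:R ->
  OK = 3%:R * n%:R * (f p ^+ n - f q ^+ n) / ((f p - f q) * (f p ^+ n + f q ^+ n + 2%:R)) ->
  EK + OK = f ((n%:R ^+ 2 - 1) / 4%:R +
     3%:R * n%:R * (p ^+ n - q ^+ n) / ((p - q) * (p ^+ n + q ^+ n + 2%:R))).
Proof.
move=> -> ->.
by rewrite !(rmorph_nat, rmorphXn, rmorphB, rmorphN, rmorph1, rmorphM, fmorphV, rmorphD).
Qed.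

Lemma side_gen (R K : numFieldType) (f : {rmorphism R -> K}) n (p q : R) :
  p + q = 4%:R -> p * q = 1 -> 0 < p -> 0 < q -> p != q ->
  [/\ f p + f q = 4%:R, f p * f q = 1, f p ^+ n + 1 != 0, f q ^+ n + 1 != 0 & f p - f q != 0].
Proof.
move=> hs hp p0 q0 pq; split.
- by rewrite -rmorphD hs rmorph_nat.
- by rewrite -rmorphM hp rmorph1.
- rewrite -rmorphXn -(rmorph1 f) -rmorphD fmorph_eq0 gt_eqF //.
  by rewrite ltr_wpDl ?exprn_ge0 ?ltW.
- rewrite -rmorphXn -(rmorph1 f) -rmorphD fmorph_eq0 gt_eqF //.
  by rewrite ltr_wpDl ?exprn_ge0 ?ltW.
- by rewrite -rmorphB fmorph_eq0 subr_eq0.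
Qed.
Lemma kem_sum (R : rcfType) n (hn : (3 <= n)%N) (z : R[i])
  (hz : (n + n).-primitive_root z) :
  let p : R := 2 + Num.sqrt 3 in
  let q : R := 2 - Num.sqrt 3 in
  \sum_(k < n + n) (rr z k)^-1 =
  ((n%:R ^+ 2 - 1) / 4 +
        (Num.sqrt 3 * n%:R / 2) * ((p ^+ n - q ^+ n) / (p ^+ n + q ^+ n + 2))).
Proof.
move=> p q.
have hs2 : Num.sqrt 3 ^+ 2 = 3 :> R by rewrite sqr_sqrtr // ler0n.
have s0 : 0 < Num.sqrt 3 :> R by rewrite sqrtr_gt0 ltr0n.
have s2 : Num.sqrt 3 < 2 :> R by nra.
have hp : 0 < p by rewrite /p; lra.
have hq : 0 < q by rewrite /q; lra.
have hpn : 0 < p ^+ n by rewrite exprn_gt0.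
have hqn : 0 < q ^+ n by rewrite exprn_gt0.
have d0 : p ^+ n + q ^+ n + 2 != 0 by rewrite gt_eqF //; lra.
have h2 : 2 != 0 :> R by rewrite pnatr_eq0.
rewrite -(final_alg n%:R hs2 (negbT (gt_eqF s0)) d0 h2).
have hn0 : (0 < n)%N by lia.
have hw : n.-primitive_root (z ^+ 2).
  have hd : (n %| n + n)%N by rewrite dvdn_addl.
  have := dvdn_prim_root hz hd.
  by rewrite addnn -mul2n mulnK.
apply: (@complexI R).
rewrite rmorph_sum (eq_bigr (fun k : 'I_(n + n) =>
   (1 - 3%:R^-1 * (z ^+ k + (z ^+ k)^-1 + (-1) ^+ k))^-1)); last first.
  by move=> k _; rewrite -(lam_form _ hn0 hz) (mu_real hn hz); exact: fmorphV.
rewrite (sum_split n (fun k => (1 - 3%:R^-1 * (z ^+ k + (z ^+ k)^-1 + (-1) ^+ k))^-1)).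
have m1sq : (-1) ^+ 2 = 1 :> R[i] by rewrite expr2 mulrNN mulr1.
under eq_bigr => j _ do rewrite !exprM m1sq expr1n.
under [X in _ + X]eq_bigr => j _ do rewrite !exprS !exprM m1sq expr1n mulr1.
have hpq : p + q = 4%:R by rewrite /p /q; ring.
have hpp : p * q = 1.
  rewrite /p /q (_ : (2 + Num.sqrt 3) * (2 - Num.sqrt 3) = 4%:R - Num.sqrt 3 ^+ 2 :> R); last by ring.
  by rewrite hs2; ring.
have pq : p != q by apply/eqP => h; move: h; rewrite /p /q; lra.
have [hPQs hPQp hPn hQn hPQ] := side_gen (real_complex R) n hpq hpp hp hq pq.
apply: (final_gen (f := real_complex R) (p := p) (q := q)).
  exact: even_sum hn0 hw.
exact: odd_sum hn0 hw (zn_m1 hn0 hz) hPQs hPQp hPn hQn hPQ.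
Qed.


Unset Implicit Arguments. Set Strict Implicit.

Theorem theorem4p3 (R : rcfType) (n : nat) (hn : (3 <= n)%N) :
  let p : R := 2 + Num.sqrt 3 in
  let q : R := 2 - Num.sqrt 3 in
  let L := norm_laplacian (mobius_adj R n) in
  (exists s : seq R, is_sorted_spectrum L s) /\
  (forall s : seq R, is_sorted_spectrum L s ->
     kemeny_of_spectrum s =
       ((n%:R ^+ 2 - 1) / 4 +
        (Num.sqrt 3 * n%:R / 2) * ((p ^+ n - q ^+ n) / (p ^+ n + q ^+ n + 2)))).
Proof.
move=> p q L.
have hn0 : (0 < n + n)%N by lia.
have [z hz] := prim_root_exists R (n + n) hn0.
have hc := charL hn hz.
pose r := [seq rr z k | k <- index_iota 0 (n + n)].
have hr : \prod_(k < n + n) ('X - (rr z k)%:P) = \prod_(x <- r) ('X - x%:P).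
  by rewrite big_map big_mkord.
split.
  exists (sort <=%R r); split; first exact: (sort_sorted (@le_total _ R)).
  rewrite /L hc hr; apply: perm_big; by rewrite perm_sym perm_sort.
move=> s [hsort hs].
have hp : perm_eq s r by apply: prod_XsubC_perm; rewrite -hs /L hc hr.
have r0 : 0 \in r.
  apply/mapP; exists 0%N; first by rewrite mem_index_iota.
  rewrite /rr expr0 /=.
  have h3 : (3%:R : R) != 0 by rewrite pnatr_eq0.
  by field.
have rge0 x : x \in r -> 0 <= x.
  by move=> /mapP [k _ ->]; exact: (rr_ge0 hn hz).
have ks := kem_sum hn hz.
rewrite /= in ks.
case: s hsort hp hs => [|a s'] hsort hp hs.
  by move: (perm_size hp); rewrite size_map /index_iota subn0 size_iota /=; lia.
have a0 : a = 0.
  have ha : 0 <= a by apply: rge0; rewrite -(perm_mem hp) mem_head.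
  have hmin := order_path_min (@le_trans _ R) hsort.
  have : 0 \in a :: s' by rewrite (perm_mem hp).
  rewrite in_cons => /orP [/eqP <- //|h0].
  apply/eqP; rewrite eq_le ha andbT.
  exact: (allP hmin).
rewrite /kemeny_of_spectrum /= big_add1 /= -ks.
have e : \sum_(k < n + n) (rr z k)^-1 = \sum_(x <- r) x^-1.
  by rewrite big_map big_mkord.
rewrite e -(perm_big _ hp) big_cons a0 invr0.
transitivity (\sum_(x <- s') x^-1); first by rewrite [RHS](big_nth 0).
exact: (esym (add0r _)).
Qed.
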